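(* Let $Y$ be a discrete random variable taking values in a set $\mathcal{Y}$, and let $B=(B_0,\dots,B_{m-1})$ be a binary random vector taking values in $\{0,1\}^m$, defined on the same probability space. Suppose that $\mathbf{H}(Y\mid B)=0$ and that the components of $B$ are independent conditionally on $Y$, i.e. $P(B=b\mid Y=y)=\prod_{i=0}^{m-1}P(B_i=b_i\mid Y=y)$ for all $b\in\{0,1\}^m$ and all $y$ with $P(Y=y)>0$. Then for every class $y_n\in\mathcal{Y}$ with $P(Y=y_n)>0$ there exists a vector $\mu^{(n)}\in\mathbb{R}^{m+1}$ such that for every $b\in\{0,1\}^m$ with $P(B=b)\neq 0$, \[ (b_0,\dots,b_{m-1},1)\cdot\mu^{(n)}>0 \iff P(Y=y_n\mid B=b)=1 . \]
   Context: $\mathbf{H}(Y\mid B)$ denotes the conditional Shannon entropy of $Y$ given $B$; the condition $\mathbf{H}(Y\mid B)=0$ means $Y$ is almost surely a function of $B$. The dot denotes the standard inner product on $\mathbb{R}^{m+1}$. *)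

(* Defs.v *)
From HB Require Import structures.
From mathcomp Require Import all_boot all_order all_algebra.
From mathcomp Require Import all_classical all_reals all_analysis.
Set Implicit Arguments. Unset Strict Implicit. Unset Printing Implicit Defensive.
Import Order.TTheory GRing.Theory Num.Theory.
Local Open Scope classical_set_scope.
Local Open Scope ring_scope.

Section Defs.
Context {d : measure_display} {Omega : measurableType d} {R : realType}.
Variable P : probability Omega R.

Definition Pr (A : set Omega) : R := fine (P A).

Definition cPr (A C : set Omega) : R := Pr (A `&` C) / Pr C.

Definition ev {T : Type} (X : Omega -> T) (x : T) : set Omega := X @^-1` [set x].

Definition discrete_rv {T : Type} (X : Omega -> T) : Prop :=
  forall x, measurable (ev X x).

(* -q ln q, with the convention 0 ln 0 = 0 (ln 0 = 0 in mathcomp-analysis) *)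
Definition entr_term (q : R) : R := - (q * ln q).

Definition cond_entropy {T : choiceType} {U : finType} (Y : Omega -> T) (B : Omega -> U)
  : \bar R :=
  (\sum_(b : U) (Pr (ev B b))%:E *
     \esum_(y in [set: T]) (entr_term (cPr (ev Y y) (ev B b)))%:E)%E.

End Defs.

Definition dotR {R : realType} {n : nat} (x y : 'I_n -> R) : R :=
  \sum_(i < n) x i * y i.

(* the augmented vector (b_0, ..., b_{m-1}, 1) *)
Definition augment {R : realType} {m : nat} (b : {ffun 'I_m -> bool}) : 'I_m.+1 -> R :=
  fun i => match unlift ord_max i with
           | Some j => (b j)%:R
           | None => 1
           end.

(* Main.v *)
Require Import Defs.
From HB Require Import structures.
From mathcomp Require Import all_boot all_order all_algebra.
From mathcomp Require Import all_classical all_reals all_analysis.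
Import Order.TTheory GRing.Theory Num.Theory.
Local Open Scope classical_set_scope.
Local Open Scope ring_scope.

Section H.
Context {d : measure_display} {Omega : measurableType d} {R : realType}.
Variable P : probability Omega R.

Lemma Pr_ge0 A : 0 <= Pr P A.
Proof. by rewrite /Pr fine_ge0. Qed.

Lemma Pr_le A C : measurable A -> measurable C -> A `<=` C -> Pr P A <= Pr P C.
Proof.
move=> mA mC AC; rewrite /Pr; apply: fine_le; rewrite ?inE ?fin_num_measure //.
by apply: le_measure; rewrite ?inE.
Qed.

Lemma cPr_01 {A C} : measurable A -> measurable C ->
  0 <= cPr P A C <= 1.
Proof.
move=> mA mC; rewrite /cPr; have [C0|C0] := eqVneq (Pr P C) 0.
  by rewrite C0 invr0 mulr0 lexx ler01.

have Cp : 0 < Pr P C by rewrite lt_def C0 Pr_ge0.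
rewrite divr_ge0 ?Pr_ge0 //= ler_pdivrMr // mul1r.
by apply: Pr_le => //; exact: measurableI.
Qed.

Lemma entr_ge0 (q : R) : 0 <= q <= 1 -> 0 <= entr_term q.
Proof.
case/andP=> q0 q1; rewrite /entr_term oppr_ge0.
by rewrite mulr_ge0_le0 // ln_le0.
Qed.

Lemma entr_eq0 (q : R) : 0 < q -> entr_term q = 0 -> q = 1.
Proof.
move=> q0 /eqP; rewrite /entr_term oppr_eq0 mulf_eq0 gt_eqF //= ln_eq0 //.
by move/eqP.
Qed.

Lemma entropy_det (T : countType) (U : finType) (Y : Omega -> T) (B : Omega -> U)
  (hY : discrete_rv Y) (hB : discrete_rv B) (hH : cond_entropy P Y B = 0%E)
  (b : U) (y : T) : Pr P (ev B b) != 0 ->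
  cPr P (ev Y y) (ev B b) != 0 -> cPr P (ev Y y) (ev B b) = 1.
Proof.
move=> hb hq.
have F0 : forall b' : U, true -> (0 <= (Pr P (ev B b'))%:E *
     \esum_(y in [set: T]) (entr_term (cPr P (ev Y y) (ev B b')))%:E)%E.
  move=> b' _; apply: mule_ge0; first by rewrite lee_fin Pr_ge0.
  apply: esum_ge0 => y' _; rewrite lee_fin entr_ge0 //; exact: cPr_01.
move: hH; rewrite /cond_entropy => /eqP; rewrite (seq_psume_eq0 _ F0).
move=> /allP /(_ b (mem_index_enum _)) /=; rewrite mule_eq0 eqe (negbTE hb) /=.
move=> /eqP hE.
have q01 := cPr_01 (hY y) (hB b) : 0 <= cPr P (ev Y y) (ev B b) <= 1.
have hle : ((entr_term (cPr P (ev Y y) (ev B b)))%:E <=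
   \esum_(y in [set: T]) (entr_term (cPr P (ev Y y) (ev B b)))%:E)%E.
  apply: esum_ge; exists [set y]; first by split; [exact: finite_set1|].
  by rewrite fsbig_set1.
rewrite hE lee_fin in hle.
apply: entr_eq0; first by rewrite lt_def hq; case/andP: q01.
by apply/eqP; rewrite eq_le hle entr_ge0.
Qed.
End H.

Theorem theorem1 (d : measure_display) (Omega : measurableType d) (R : realType)
  (P : probability Omega R) (T : countType) (m : nat)
  (Y : Omega -> T) (B : Omega -> {ffun 'I_m -> bool})
  (hY : discrete_rv Y) (hB : discrete_rv B)
  (hH : cond_entropy P Y B = 0%E)
  (hind : forall (b : {ffun 'I_m -> bool}) (y : T), Pr P (ev Y y) > 0 ->
     cPr P (ev B b) (ev Y y) =
     \prod_(i < m) cPr P (ev (fun w => B w i) (b i)) (ev Y y)) :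
  forall yn : T, Pr P (ev Y yn) > 0 ->
  exists mu : 'I_m.+1 -> R,
    forall b : {ffun 'I_m -> bool}, Pr P (ev B b) != 0 ->
      (0 < dotR (augment b) mu <-> cPr P (ev Y yn) (ev B b) = 1).
Proof.
move=> yn hyn.
pose S (i : 'I_m) (c : bool) := cPr P (ev (fun w => B w i) c) (ev Y yn).
pose g (i : 'I_m) (c : bool) : R := if S i c != 0 then 0 else -1.
exists (fun j => match unlift ord_max j with
          | Some i => g i true - g i false
          | None => 2^-1 + \sum_(i < m) g i false end).
move=> b hb.
have hdot : dotR (augment b) (fun j => match unlift ord_max j with
          | Some i => g i true - g i false
          | None => 2^-1 + \sum_(i < m) g i false end)
    = 2^-1 + \sum_(i < m) g i (b i).
  rewrite /dotR big_ord_recr /= /augment unlift_none mul1r.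
  have wl : forall i : 'I_m, widen_ord (leqnSn m) i = lift ord_max i.
    by move=> i; apply/val_inj; rewrite /= /bump leqNgt ltn_ord.
  under eq_bigr => i _ do rewrite wl liftK.
  rewrite addrC -addrA -big_split /=; congr (_ + _); apply: eq_bigr => i _.
  by case: (b i); rewrite /= ?mul1r ?mul0r ?addr0 // addrC subrK.
rewrite hdot.
have step1 : (0 < 2^-1 + \sum_(i < m) g i (b i)) <-> (forall i, S i (b i) != 0).
  split.
    move=> hpos i; apply/negP => hS; move: hpos.
    rewrite (bigD1 i) //= /g hS /=.
    have : \sum_(j < m | j != i) g j (b j) <= 0.
      by apply: sumr_le0 => j _; rewrite /g; case: ifP => // _; rewrite lerN10.
    move=> h; apply/negP; rewrite -leNgt.
    have h2 : (2^-1 : R) <= 1 by rewrite invf_le1 // ler1n.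
    by rewrite addrA -[X in _ <= X]addr0; apply: lerD => //; rewrite subr_le0.
  move=> hall; rewrite big1 ?addr0 ?invr_gt0 ?ltr0n // => i _.
  by rewrite /g hall.
rewrite step1.
have step2 : (forall i, S i (b i) != 0) <-> cPr P (ev Y yn) (ev B b) != 0.
  have hYn0 : Pr P (ev Y yn) != 0 by rewrite gt_eqF.
  have e1 : (cPr P (ev B b) (ev Y yn) != 0) = (Pr P (ev Y yn `&` ev B b) != 0).
    by rewrite /cPr mulf_eq0 invr_eq0 (negbTE hYn0) orbF setIC.
  have e2 : (cPr P (ev Y yn) (ev B b) != 0) = (Pr P (ev Y yn `&` ev B b) != 0).
    by rewrite /cPr mulf_eq0 invr_eq0 (negbTE hb) orbF.
  rewrite e2 -e1 hind //.
  by split; [move=> h; apply/prodf_neq0 => i _; exact: h | move/prodf_neq0 => h i; exact: h].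
rewrite step2; split; last by move=> ->; rewrite oner_eq0.
exact: entropy_det.
Qed.
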